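(* Let $\mathbb{S}$ be a locally finite (i.e. $\mathbb{S}\cap H$ is finite for every bounded $H\subset\mathbb{R}$), unbounded subset of $[0,\infty)$ with $0\in\mathbb{S}$. Let $(X_t)_{t\in\mathbb{N}}$ be an $\mathbb{S}$-valued process adapted to a filtration $(\mathcal{F}_t)_{t\in\mathbb{N}}$ with $\mathbb{P}[X_1=0]=1$. Assume that for each $x,y\in\mathbb{S}$ there exist $m(x,y)\in\mathbb{N}$ and $\varphi(x,y)>0$ such that $\mathbb{P}[X_{t+m(X_t,y)}=y\mid\mathcal{F}_t]\ge\varphi(X_t,y)$ a.s. for all $t\in\mathbb{N}$. Then $\limsup_{t\to\infty}X_t=\infty$ a.s. If in addition $\mathbb{P}[\eta_{n+1}<\infty\mid\tau_n<\infty]=\mathbb{P}[\eta_1<\infty]$ for all $n\in\mathbb{N}$, then exactly one of the following holds: (i) $\mathbb{P}[\eta_1<\infty]<1$ and $\lim_{t\to\infty}X_t=\infty$ a.s.; or (ii) $\mathbb{P}[\eta_1<\infty]=1$ and $\liminf_{t\to\infty}X_t=0$ a.s.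
   Context: $\mathbb{N}=\{1,2,\dots\}$. Return times to $0$: $\tau_0:=1$ and $\tau_n:=\min\{t>\tau_{n-1}:X_t=0\}$ for $n\in\mathbb{N}$ (with $\min\emptyset=\infty$); when $\tau_n<\infty$, $\eta_n:=\tau_n-\tau_{n-1}$ is the duration of the $n$th excursion (with $\eta_n=\infty$ otherwise). *)

(* Defs.v *)
From HB Require Import structures.
From mathcomp Require Import all_boot all_order all_algebra.
From mathcomp Require Import all_classical all_reals all_analysis.
Set Implicit Arguments. Unset Strict Implicit. Unset Printing Implicit Defensive.
Import Order.TTheory GRing.Theory Num.Theory.
Local Open Scope classical_set_scope.
Local Open Scope ring_scope.

(* Time index: t : nat, only t >= 1 is used (N = {1,2,...}). *)

Section Returns.
Context {Omega : Type} {R : realType}.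
Variable X : nat -> Omega -> R.

Definition next_zero (s : nat) (w : Omega) : option nat :=
  match pselect (exists t, (s < t)%N && (X t w == 0)) with
  | left h => Some (ex_minn h)
  | right _ => None
  end.

(* tau_0 := 1, tau_n := min{t > tau_{n-1} : X_t = 0}; None stands for infinity *)
Fixpoint ret_time (n : nat) (w : Omega) : option nat :=
  match n with
  | O => Some 1%N
  | S n' => obind (fun s => next_zero s w) (ret_time n' w)
  end.

(* eta_n := tau_n - tau_{n-1} when tau_n < oo, and infinity (None) otherwise *)
Definition exc_len (n : nat) (w : Omega) : option nat :=
  match ret_time n w, ret_time n.-1 w with
  | Some a, Some b => Some (a - b)%N
  | _, _ => None
  end.
End Returns.

Definition locally_finite {R : realType} (S : set R) : Prop :=
  forall H : set R, (exists M : R, forall x, H x -> `|x| <= M) ->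
    finite_set (S `&` H).

Definition unbounded_above {R : realType} (S : set R) : Prop :=
  forall M : R, exists2 x, S x & M < x.

Definition filtration {d} {Omega : measurableType d}
  (F : nat -> set (set Omega)) : Prop :=
  (forall t, (1 <= t)%N -> sigma_algebra setT (F t) /\ F t `<=` measurable) /\
  (forall s t, (1 <= s)%N -> (s <= t)%N -> F s `<=` F t).

Definition adapted {d} {Omega : measurableType d} {R : realType}
  (F : nat -> set (set Omega)) (X : nat -> Omega -> R) : Prop :=
  forall t, (1 <= t)%N -> forall A : set R, measurable A -> F t (X t @^-1` A).

(* Main.v *)
Require Import Defs.
From HB Require Import structures.
From mathcomp Require Import all_boot all_order all_algebra.
From mathcomp Require Import all_classical all_reals all_analysis.
Import Order.TTheory GRing.Theory Num.Theory.
Local Open Scope classical_set_scope.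
Local Open Scope ring_scope.

Section sig.
Context {T : Type} (G : set (set T)) (hG : sigma_algebra setT G).

Lemma sig_set0 : G set0. Proof. by case: hG. Qed.
Lemma sig_setC A : G A -> G (~` A).
Proof. by case: hG => _ h _ /h; rewrite setTD. Qed.
Lemma sig_setT : G setT.
Proof. by rewrite -setC0; apply: sig_setC; apply: sig_set0. Qed.
Lemma sig_bigcup (A : nat -> set T) : (forall n, G (A n)) -> G (\bigcup_n A n).
Proof. by case: hG => _ _; apply. Qed.
Lemma sig_bigcap (A : nat -> set T) : (forall n, G (A n)) -> G (\bigcap_n A n).
Proof.
move=> h; rewrite -[X in G X]setCK setC_bigcap; apply: sig_setC.
by apply: sig_bigcup => n; apply: sig_setC.
Qed.
Lemma sig_setU A B : G A -> G B -> G (A `|` B).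
Proof. move=> hA hB; rewrite -bigcup2E; apply: sig_bigcup => -[|[|n]]; rewrite /bigcup2 //=; exact: sig_set0. Qed.
Lemma sig_setI A B : G A -> G B -> G (A `&` B).
Proof.
move=> hA hB; rewrite -[X in G X]setCK setCI; apply: sig_setC.
by apply: sig_setU; apply: sig_setC.
Qed.
End sig.

Section main.
Context (R : realType) (d : measure_display)
  (Omega : measurableType d) (P : probability Omega R)
  (S : set R) (F : nat -> set (set Omega)) (X : nat -> Omega -> R)
  (m : R -> R -> nat) (phi : R -> R -> R).
Hypotheses (hlf : locally_finite S) (hpos : S `<=` [set x | 0 <= x]) (hF : filtration F) (hA : adapted F X)
  (hS : forall t, (1 <= t)%N -> forall w, S (X t w))
  (hmphi : forall x y, S x -> S y -> (0 < m x y)%N /\ 0 < phi x y)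
  (hyp : forall y, S y -> forall t, (1 <= t)%N -> forall B, F t B ->
     (\int[P]_(w in B) (phi (X t w) y)%:E <=
        P (B `&` [set w | X (t + m (X t w) y)%N w = y]))%E).

Lemma Fsig {t} : (1 <= t)%N -> sigma_algebra setT (F t).
Proof. by move=> t1; case: hF => h _; case: (h t t1). Qed.

Lemma Fmeas {t B} : (1 <= t)%N -> F t B -> measurable B.
Proof. by move=> t1; case: hF => h _; case: (h t t1) => _; apply. Qed.

Lemma FX {t s A} : (1 <= s)%N -> (s <= t)%N -> measurable A -> F t (X s @^-1` A).
Proof.
move=> s1 st mA; case: hF => _ h; apply: (h s t s1 st); exact: hA.
Qed.

Lemma mX {s A} : (1 <= s)%N -> measurable A -> measurable (X s @^-1` A).
Proof. by move=> s1 mA; apply: (@Fmeas s) => //; apply: (@FX s s). Qed.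



Lemma pigeon_res (Q : nat -> Prop) k : (0 < k)%N ->
  (forall n, exists t, (n <= t)%N /\ Q t) ->
  exists r, forall N, exists j, (N <= j)%N /\ Q (r + j * k)%N.
Proof.
move=> k0 hQ; apply: contrapT => hn.
have hr : forall r, exists N, forall j, (N <= j)%N -> ~ Q (r + j * k)%N.
  move=> r; apply: contrapT => h1; apply: hn; exists r => N.
  apply: contrapT => h2; apply: h1; exists N => j Nj Qj; apply: h2; exists j; split => //.
have hk : forall k', exists N, forall r, (r < k')%N -> forall j, (N <= j)%N -> ~ Q (r + j * k)%N.
  elim => [|k' [N hN]]; first by exists 0%N.
  have [N' hN'] := hr k'; exists (maxn N N') => r; rewrite ltnS leq_eqVlt => /orP[/eqP->|rk] j Nj.
    by apply: hN'; exact: leq_trans (leq_maxr _ _) Nj.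
  by apply: hN => //; exact: leq_trans (leq_maxl _ _) Nj.
have [N hN] := hk k; have [t [tN Qt]] := hQ (N * k)%N.
apply: (hN (t %% k)%N (ltn_pmod _ k0) (t %/ k)%N); first by rewrite leq_divRL.
by rewrite addnC -divn_eq.
Qed.

Section core.
Variables (x y : R) (T : nat).
Hypotheses (hx : S x) (hy : S y) (hT : (1 <= T)%N).

Let m0 := m x y.
Let c := phi x y.
Let hm0 : (0 < m0)%N. Proof. by case: (hmphi x y hx hy). Qed.
Let hc : 0 < c. Proof. by case: (hmphi x y hx hy). Qed.

Definition Bt t := [set w | (T <= t)%N /\ (forall s, (T <= s <= t)%N -> X s w <> y) /\ X t w = x].
Definition Ht t := Bt t `&` [set w | X (t + m0)%N w = y].

Lemma Bt_set0 t : ~~ (T <= t)%N -> Bt t = set0.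
Proof. by move=> /negP h; apply/seteqP; split => w // [/h]. Qed.

Lemma Bt_F t : (1 <= t)%N -> F t (Bt t).
Proof.
move=> t1; case: (boolP (T <= t)%N) => Tt; last first.
  by rewrite Bt_set0 //; apply: (@sig_set0 _ _ (Fsig t1)).
have -> : Bt t = (\bigcap_s (if (T <= s <= t)%N then X s @^-1` (~` [set y]) else setT))
   `&` (X t @^-1` [set x]).
  apply/seteqP; split => w.
  - move=> [_ [h1 h2]]; split => // s _ /=; case: ifPn => // hs; exact: h1 s hs.
  - move=> [h1 h2]; split => //; split => // s hs; have := h1 s I; rewrite /= hs; exact.
apply: (@sig_setI _ _ (Fsig t1)).
  apply: (@sig_bigcap _ _ (Fsig t1)) => s; case: ifPn => [/andP[a b]|_].
    apply: FX => //; [exact: leq_trans hT a| exact: measurableC (measurable_set1 y)].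
  exact: @sig_setT _ _ (Fsig t1).
by apply: FX => //; exact: measurable_set1.
Qed.

Lemma Bt_meas t : measurable (Bt t).
Proof.
case: (boolP (T <= t)%N) => Tt; last by rewrite Bt_set0.
apply: (@Fmeas t); [exact: leq_trans hT Tt| apply: Bt_F; exact: leq_trans hT Tt].
Qed.

Lemma Ht_meas t : measurable (Ht t).
Proof.
apply: measurableI; first exact: Bt_meas.
exact: (@mX (t + m0)%N [set y] (ltn_addl _ hm0) (measurable_set1 y)).
Qed.

Lemma Ht_bound t : (c%:E * P (Bt t) <= P (Ht t))%E.
Proof.
case: (boolP (T <= t)%N) => Tt; last by rewrite Bt_set0 // measure0 mule0 measure_ge0.
have t1 : (1 <= t)%N by exact: leq_trans hT Tt.
have := hyp y hy t t1 (Bt t) (@Bt_F t t1).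
have -> : (\int[P]_(w in Bt t) (phi (X t w) y)%:E = \int[P]_(w in Bt t) (cst c%:E) w)%E.
  by apply: eq_integral => w; rewrite inE => -[_ [_ ->]].
rewrite integral_cst; last exact: Bt_meas.
have -> // : Bt t `&` [set w | X (t + m (X t w) y)%N w = y] = Ht t.
apply/seteqP; split => w [[a [b e]] f]; (split; [by [] | ]); by rewrite /= ?e in f *.
Qed.


Lemma Hr_triv r : trivIset setT (fun j => Ht (r + j * m0)).
Proof.
have key i j : (i < j)%N -> Ht (r + i * m0) `&` Ht (r + j * m0) = set0.
  move=> ij; apply/seteqP; split => w // [[[Ti _] Yi] [[Tj [Dj _]] _]].
  idtac.
  apply: (Dj (r + i * m0 + m0)%N) => //; apply/andP; split.
    exact: leq_trans Ti (leq_addr _ _).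
  by rewrite -addnA leq_add2l -mulSnr leq_mul2r ij orbT.
move=> i j _ _ ne; case: (ltngtP i j) => // ij.
  by move: ne; rewrite key // => -[].
by move: ne; rewrite setIC key // => -[].
Qed.

Lemma Br_sum r : (\sum_(0 <= j <oo) P (Bt (r + j * m0)) < +oo)%E.
Proof.
have h1 : (\sum_(0 <= j <oo) P (Ht (r + j * m0)) <= 1)%E.
  rewrite -measure_semi_bigcup //; first last.
  - by apply: bigcupT_measurable => j; exact: Ht_meas.
  - exact: Hr_triv.
  - by move=> j; exact: Ht_meas.
  by apply: probability_le1; apply: bigcupT_measurable => j; exact: Ht_meas.
have h2 : (c%:E * \sum_(0 <= j <oo) P (Bt (r + j * m0)) <= 1)%E.
  rewrite -nneseriesZl //; apply: le_trans h1.
  by apply: lee_nneseries => [j _ _|j _]; [rewrite mule_ge0 // lee_fin ltW | exact: Ht_bound].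
have hs0 : (0 <= \sum_(0 <= j <oo) P (Bt (r + j * m0)))%E by apply: nneseries_ge0.
move: h2 hs0; case: (\sum_(0 <= j <oo) P (Bt (r + j * m0)))%E => [r0 _ _|h2 _|//]; first by rewrite ltry.
by move: h2; rewrite mulry gtr0_sg // mul1e.
Qed.

Definition Zr r := \bigcap_N \bigcup_(j in ~` `I_N) Bt (r + j * m0).

Lemma Zr_meas r : measurable (Zr r).
Proof.
apply: bigcapT_measurable => N; apply: bigcup_measurable => j _; exact: Bt_meas.
Qed.

Lemma Zr_null r : P (Zr r) = 0%E.
Proof.
apply/eqP; rewrite eq_le measure_ge0 andbT.
have hc0 := nneseries_tail_cvg (Br_sum r) (fun k _ => measure_ge0 P (Bt (r + k * m0))).
rewrite -(cvg_lim _ hc0) //; apply: lime_ge; first by apply/cvg_ex; eexists; exact: hc0.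
near=> N; apply: measure_sigma_subadditive_tail.
- by move=> n; exact: Bt_meas.
- exact: Zr_meas.
- by move=> w /(_ N I).
Unshelve. all: by end_near.
Qed.

Definition NB := [set w | (forall s, (T <= s)%N -> X s w <> y) /\
  (forall n, exists t, (n <= t)%N /\ X t w = x)].

Lemma NB_neg : P.-negligible NB.
Proof.
apply: (@negligibleS _ _ _ _ (\bigcup_r Zr r)); last first.
  by apply: negligible_bigcup => r; exists (Zr r); split => //; [exact: Zr_meas | exact: Zr_null].
move=> w [hy' hx'].
have [r hr] := @pigeon_res (fun t => (T <= t)%N /\ X t w = x) m0 hm0
  (fun n => let: ex_intro t (conj a b) := hx' (maxn n T) in
     ex_intro _ t (conj (leq_trans (leq_maxl _ _) a) (conj (leq_trans (leq_maxr _ _) a) b))).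
exists r => // N _; have [j [Nj [Tj Xj]]] := hr N.
exists j; first by rewrite /= ltnNge Nj.
split => //; split => // s /andP[Ts _]; exact: hy'.
Qed.

End core.

Lemma list_bound (s : seq R) (Q : R -> nat -> Prop) :
  (forall x, x \in s -> exists N, forall t, (N <= t)%N -> Q x t) ->
  exists N, forall x, x \in s -> forall t, (N <= t)%N -> Q x t.
Proof.
elim: s => [|a s IH] h; first by exists 0%N.
have [N1 h1] := h a (mem_head _ _).
have [N2 h2] := IH (fun x xs => h x (introT orP (or_intror xs))).
exists (maxn N1 N2) => x; rewrite in_cons => /orP[/eqP->|xs] t Nt.
  by apply: h1; exact: leq_trans (leq_maxl _ _) Nt.
by apply: h2 => //; exact: leq_trans (leq_maxr _ _) Nt.
Qed.

Lemma NBs_neg (s : seq R) y T : S y -> (1 <= T)%N -> (forall x, x \in s -> S x) ->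
  P.-negligible (\big[setU/set0]_(x <- s) NB x y T).
Proof.
move=> hy hT; elim: s => [|a s IH] hs; first by rewrite big_nil; exact: negligible_set0.
rewrite big_cons; apply: negligibleU.
  by apply: NB_neg => //; apply: hs; exact: mem_head.
by apply: IH => x xs; apply: hs; rewrite in_cons xs orbT.
Qed.

Lemma in_bigsetU (s : seq R) (A : R -> set Omega) x w : x \in s -> A x w ->
  (\big[setU/set0]_(z <- s) A z) w.
Proof.
elim: s => // a s IH; rewrite in_cons big_cons => /orP[/eqP->|xs] h; [by left|right; exact: IH].
Qed.

Definition Eb (K : R) y T := [set w | (forall s, (T <= s)%N -> X s w <> y) /\
  (forall n, exists t, (n <= t)%N /\ X t w <= K)].

Lemma Eb_neg K y T : S y -> (1 <= T)%N -> P.-negligible (Eb K y T).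
Proof.
move=> hy hT.
have [s0 hs0] : exists s0 : seq R, S `&` [set z | `|z| <= K] = [set` s0].
  by apply/finite_seqP; apply: hlf; exists K.
apply: (@negligibleS _ _ _ _ (\big[setU/set0]_(x <- s0) NB x y T)); last first.
  by apply: NBs_neg => // x xs; have : [set` s0] x by []; rewrite -hs0 => -[].
move=> w [hyw hKw]; apply: contrapT => hn.
have hb : forall x, x \in s0 -> exists N, forall t, (N <= t)%N -> X t w <> x.
  move=> x xs; apply: contrapT => h1; apply: hn.
  apply: (@in_bigsetU s0 (fun z => NB z y T) x w xs); split => // n; apply: contrapT => h2; apply: h1.
  by exists n => t nt Xt; apply: h2; exists t.
have [N hN] := @list_bound s0 (fun x t => X t w <> x) hb.
have [t [tN Xt]] := hKw (maxn N 1).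
have t1 : (1 <= t)%N by exact: leq_trans (leq_maxr _ _) tN.
have : [set` s0] (X t w).
  rewrite -hs0; split; first exact: hS.
  by rewrite /= ger0_norm //; apply: hpos; exact: hS.
move=> /= xs; exact: (hN _ xs t (leq_trans (leq_maxl _ _) tN)).
Qed.

Lemma esup_inf (u : nat -> R) :
  (forall (A : R) n, exists t, (n <= t)%N /\ A < u t) ->
  limn_esup (fun t => (u t)%:E) = +oo%E.
Proof.
move=> h; rewrite limn_esup_lim.
have -> : esups (fun t => (u t)%:E) = fun=> +oo%E.
  apply/funext => n; apply: eq_infty => r.
  have [t [nt rt]] := h r n; apply: (@le_trans _ _ (u t)%:E); first by rewrite lee_fin ltW.
  by apply: ereal_sup_ubound; exists t.
exact: lim_cst.
Qed.

Lemma part1 : unbounded_above S ->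
  {ae P, forall w, limn_esup (fun t => (X t w)%:E) = +oo%E}.
Proof.
move=> hub.
pose yK (K : nat) := sval (cid2 (hub K%:R)).
have hyS K : S (yK K) by rewrite /yK; case: cid2.
have hyK K : K%:R < yK K by rewrite /yK; case: cid2.
apply: (@negligibleS _ _ _ _ (\bigcup_K \bigcup_T Eb K%:R (yK K) T.+1)); last first.
  by apply: negligible_bigcup => K; apply: negligible_bigcup => T; exact: Eb_neg.
move=> w /= hw; apply: contrapT => hn; apply: hw; apply: esup_inf => A n.
apply: contrapT => hnA.
have hle : forall t, (n <= t)%N -> X t w <= A.
  move=> t nt; rewrite leNgt; apply/negP => At; apply: hnA; by exists t.
pose K := (Num.trunc A).+1.
have AK : A <= K%:R by apply: ltW; exact: truncnS_gt.
apply: hn; exists K => //; exists n => //; split.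
  move=> s ns Xs; have := hle s (leq_trans (leqnSn n) ns).
  by rewrite Xs leNgt (le_lt_trans AK (hyK K)).
move=> n'; exists (maxn n' n); split; first exact: leq_maxl.
exact: le_trans (hle _ (leq_maxr _ _)) AK.
Qed.

Lemma next_zeroP s w k : next_zero X s w = Some k <->
  [/\ (s < k)%N, X k w = 0 & forall u, (s < u < k)%N -> X u w <> 0].
Proof.
rewrite /next_zero; case: pselect => [h|h]; last first.
  split => // -[sk Xk _]; exfalso; apply: h; exists k; rewrite sk; exact/eqP.
split.
  move=> [<-]; case: ex_minnP => k0 /andP[sk /eqP Xk] hmin; split => // u /andP[su uk] Xu.
  by have := hmin u; rewrite su Xu eqxx => /(_ isT); rewrite leqNgt uk.
move=> [sk Xk hu]; congr Some; case: ex_minnP => k0 /andP[sk0 /eqP Xk0] hmin.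
apply/eqP; rewrite eqn_leq; apply/andP; split.
  by apply: hmin; rewrite sk Xk eqxx.
rewrite leqNgt; apply/negP => k0k; apply: (hu k0) => //; by rewrite sk0 k0k.
Qed.

Lemma nz_meas j k : measurable [set w | next_zero X j w = Some k].
Proof.
case: (ltnP j k) => jk; last first.
  have -> : [set w | next_zero X j w = Some k] = set0.
    by apply/seteqP; split => w // /next_zeroP [jk' _ _]; rewrite leqNgt jk' in jk.
  exact: measurable0.
have -> : [set w | next_zero X j w = Some k] = (X k @^-1` [set 0]) `&`
   \bigcap_u (if (j < u < k)%N then X u @^-1` (~` [set 0]) else setT).
  apply/seteqP; split => w.
    move=> /next_zeroP [_ Xk hu]; split => // u _ /=; case: ifPn => // hu'; exact: hu.
  move=> [Xk hu]; apply/next_zeroP; split => // u hu'; have := hu u I; rewrite /= hu'; exact.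
apply: measurableI.
  by apply: mX; [exact: leq_ltn_trans (leq0n j) jk | exact: measurable_set1].
apply: bigcapT_measurable => u; case: ifPn => [/andP[ju _]|_]; last exact: measurableT.
by apply: mX; [exact: leq_ltn_trans (leq0n j) ju | exact: measurableC (measurable_set1 _)].
Qed.

Lemma ret_meas n k : measurable [set w | ret_time X n w = Some k].
Proof.
elim: n k => [|n IH] k /=.
  case: (eqVneq k 1%N) => [->|k1].
    by have -> : [set w : Omega | Some 1%N = Some 1%N] = setT by apply/seteqP; split.
  have -> : [set w : Omega | Some 1%N = Some k] = set0.
    by apply/seteqP; split => w // -[k1']; rewrite k1' eqxx in k1.
  exact: measurable0.
have -> : [set w | obind (fun s => next_zero X s w) (ret_time X n w) = Some k] =
  \bigcup_j ([set w | ret_time X n w = Some j] `&` [set w | next_zero X j w = Some k]).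
  apply/seteqP; split => w /=.
    by case E: (ret_time X n w) => [j|] // hj; exists j.
  by move=> [j _ [/= E1 E2]]; rewrite E1 /= E2.
apply: bigcupT_measurable => j; apply: measurableI; [exact: IH | exact: nz_meas].
Qed.

Definition Rn n := [set w | isSome (ret_time X n w)].

Lemma Rn_meas n : measurable (Rn n).
Proof.
have -> : Rn n = \bigcup_k [set w | ret_time X n w = Some k].
  apply/seteqP; split => w; rewrite /Rn /=.
    by case E: (ret_time X n w) => [k|] // _; exists k.
  by move=> [k _ ->].
apply: bigcupT_measurable => k; exact: ret_meas.
Qed.

Lemma Rn0 : Rn 0 = setT.
Proof. by apply/seteqP; split. Qed.

Lemma Rn_exc1 : [set w | isSome (exc_len X 1 w)] = Rn 1.
Proof. by apply/seteqP; split => w; rewrite /Rn /exc_len /=; case: (next_zero X 1 w). Qed.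

Lemma Rn_excS n : [set w | isSome (exc_len X n.+1 w)] `&` Rn n = Rn n.+1.
Proof.
apply/seteqP; split => w; rewrite /Rn /exc_len /=;
  (case: (ret_time X n w) => [j|] /=; [case: (next_zero X j w) => [k|] /= |]); by [case|split].
Qed.

Lemma ret_none n w : ret_time X n w = None ->
  exists T, (1 <= T)%N /\ forall s, (T <= s)%N -> X s w <> 0.
Proof.
elim: n => // n IH /=; case E: (ret_time X n w) => [j|] /=; last by move=> _; exact: IH.
rewrite /next_zero; case: pselect => // h _; exists j.+1; split => // s js Xs.
by apply: h; exists s; rewrite js Xs eqxx.
Qed.

Lemma ret_gt n w k : ret_time X n w = Some k -> (n < k)%N.
Proof.
elim: n k => [k [<-] //|n IH k] /=.
case E: (ret_time X n w) => [j|] //= /next_zeroP [jk _ _].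
exact: leq_ltn_trans (IH j E) jk.
Qed.

Lemma ret_inf w : (forall n, Rn n w) -> forall N, exists t, (N <= t)%N /\ X t w = 0.
Proof.
move=> h N; have : isSome (ret_time X N.+1 w) := h N.+1.
case E: (ret_time X N.+1 w) => [k|] // _; exists k; split.
  by move: (@ret_gt N.+1 w k E) => /ltnW/ltnW.
move: E => /=; case: (ret_time X N w) => //= j /next_zeroP [_ -> _] //.
Qed.

Lemma einf0 (u : nat -> R) : (forall t, (1 <= t)%N -> 0 <= u t) ->
  (forall N, exists t, (N <= t)%N /\ u t = 0) ->
  limn_einf (fun t => (u t)%:E) = 0%:E.
Proof.
move=> h0 hz; rewrite limn_einf_lim; apply: lim_near_cst => //.
exists 1%N => // n n1 /=; apply/eqP; rewrite eq_le; apply/andP; split.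
  have [t [nt ut]] := hz n; apply: ereal_inf_lbound; exists t => //; by rewrite ut.
apply/ereal_infP => _ [t /= nt <-]; rewrite lee_fin; apply: h0; exact: leq_trans n1 nt.
Qed.

Lemma cvg_inf (u : nat -> R) :
  (forall K : nat, exists n, forall t, (n <= t)%N -> K%:R < u t) ->
  u @ \oo --> +oo.
Proof.
move=> h; apply/cvgryPger => A _.
have [n hn] := h (Num.trunc A).+1; exists n => // t nt /=.
apply: ltW; apply: lt_trans (hn t nt); exact: truncnS_gt.
Qed.

Lemma exc_prob (hrec : forall n, (1 <= n)%N ->
      P ([set w | isSome (exc_len X n.+1 w)] `&` [set w | isSome (ret_time X n w)]) =
        (P [set w | isSome (exc_len X 1 w)] * P [set w | isSome (ret_time X n w)])%E) :
  forall n, P (Rn n) = (fine (P (Rn 1)) ^+ n)%:E.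
Proof.
set r := fine (P (Rn 1)).
have p1 : P (Rn 1) = r%:E.
  rewrite /r fineK // ge0_fin_numE ?measure_ge0 //.
  by apply: le_lt_trans (probability_le1 P (Rn_meas 1)) _; rewrite ltry.
elim => [|n IH]; first by rewrite Rn0 probability_setT expr0.
case: n IH => [|n] IH; first by rewrite expr1.
rewrite -Rn_excS; have := hrec n.+1 isT; rewrite -/(Rn n.+1) => ->.
by rewrite Rn_exc1 IH p1 -EFinM -exprS.
Qed.

Lemma geom_le0 (r z : R) : 0 <= r -> r < 1 -> (forall n, z <= r ^+ n) -> z <= 0.
Proof.
move=> r0 r1 h.
have hc : r ^+ n @[n --> \oo] --> 0 by apply: cvg_expr; rewrite ger0_norm.
rewrite leNgt; apply/negP => z0.
have [N _ hN] := cvgr_lt _ hc _ z0.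
by have := hN N (leqnn N); rewrite ltNge h.
Qed.

Lemma p_fin : P (Rn 1) = (fine (P (Rn 1)))%:E.
Proof.
rewrite fineK // ge0_fin_numE ?measure_ge0 //.
by apply: le_lt_trans (probability_le1 P (Rn_meas 1)) _; rewrite ltry.
Qed.

Section part2.
Hypothesis (hrec : forall n, (1 <= n)%N ->
      P ([set w | isSome (exc_len X n.+1 w)] `&` [set w | isSome (ret_time X n w)]) =
        (P [set w | isSome (exc_len X 1 w)] * P [set w | isSome (ret_time X n w)])%E).

Lemma case_i : S 0 -> fine (P (Rn 1)) < 1 ->
  {ae P, forall w, (fun t => X t w) @ \oo --> +oo}.
Proof.
move=> hS0 hr; set r := fine (P (Rn 1)) in hr.
have r0 : 0 <= r by apply: fine_ge0; exact: measure_ge0.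
pose Z0 := \bigcap_n Rn n.
have mZ0 : measurable Z0 by apply: bigcapT_measurable => n; exact: Rn_meas.
have hZ : P Z0 = 0%E.
  have hle n : (P Z0 <= (r ^+ n)%:E)%E.
    rewrite -(exc_prob hrec n); apply: le_measure; rewrite ?inE //; [exact: Rn_meas | by move=> w; apply].
  have zfin : P Z0 = (fine (P Z0))%:E.
    rewrite fineK // ge0_fin_numE ?measure_ge0 //.
    by apply: le_lt_trans (probability_le1 P mZ0) _; rewrite ltry.
  apply/eqP; rewrite eq_le measure_ge0 andbT zfin lee_fin.
  by apply: (@geom_le0 r _ r0 hr) => n; rewrite -lee_fin -zfin.
apply: (@negligibleS _ _ _ _ (Z0 `|` \bigcup_K \bigcup_T Eb K%:R 0 T.+1)); last first.
  apply: negligibleU; first by exists Z0; split.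
  by apply: negligible_bigcup => K; apply: negligible_bigcup => T; exact: Eb_neg.
move=> w /= hw; apply: contrapT => hn; apply: hw.
have [n hn0] : exists n, ~ Rn n w.
  apply: contrapT => h; apply: hn; left => n _; apply: contrapT => h'; apply: h; by exists n.
have [T [T1 hT]] : exists T, (1 <= T)%N /\ forall s, (T <= s)%N -> X s w <> 0.
  apply: (@ret_none n w); move: hn0; rewrite /Rn /=; by case: (ret_time X n w).
apply: cvg_inf => K; apply: contrapT => hK; apply: hn; right; exists K => //; exists T.-1 => //.
rewrite prednK //; split => // n'; apply: contrapT => h1; apply: hK; exists n' => t nt.
rewrite ltNge; apply/negP => Xt; apply: h1; by exists t.
Qed.

Lemma case_ii : fine (P (Rn 1)) = 1 ->
  {ae P, forall w, limn_einf (fun t => (X t w)%:E) = (0:R)%:E}.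
Proof.
move=> hr.
apply: (@negligibleS _ _ _ _ (\bigcup_n ~` Rn n)); last first.
  apply: negligible_bigcup => n; exists (~` Rn n); split => //.
    exact: measurableC (Rn_meas n).
  have h1 := @probability_setC _ _ _ P (Rn n) (Rn_meas n); apply: etrans h1 _.
  by rewrite (exc_prob hrec) hr expr1n subee.
move=> w /= hw; apply: contrapT => hn; apply: hw.
apply: einf0; first by move=> t t1; apply: hpos; exact: hS.
apply: ret_inf => n; apply: contrapT => h; apply: hn; by exists n.
Qed.

End part2.

Lemma main_sec : unbounded_above S -> S 0 ->
  {ae P, forall w, limn_esup (fun t => (X t w)%:E) = +oo%E} /\
  ((forall n, (1 <= n)%N ->
      P ([set w | isSome (exc_len X n.+1 w)] `&` [set w | isSome (ret_time X n w)]) =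
        (P [set w | isSome (exc_len X 1 w)] * P [set w | isSome (ret_time X n w)])%E) ->
   let i := (P [set w | isSome (exc_len X 1 w)] < 1)%E /\
            {ae P, forall w, (fun t => X t w) @ \oo --> +oo} in
   let ii := P [set w | isSome (exc_len X 1 w)] = 1%E /\
            {ae P, forall w, limn_einf (fun t => (X t w)%:E) = (0:R)%:E} in
   (i \/ ii) /\ ~ (i /\ ii)).
Proof.
move=> hub hS0; split; first exact: part1.
move=> hrec; rewrite Rn_exc1 /=.
have hle : fine (P (Rn 1)) <= 1.
  by rewrite -lee_fin -p_fin; have := @probability_le1 _ _ _ P (Rn 1) (Rn_meas 1).
split; last by move=> [[h1 _] [h2 _]]; move: h1; rewrite h2 ltxx.
move: hle; rewrite le_eqVlt => /orP[/eqP h1|h1].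
  right; split; first by rewrite p_fin h1.
  exact: case_ii hrec h1.
left; split; first by rewrite p_fin lte_fin.
exact: case_i hrec hS0 h1.
Qed.

End main.

Theorem proposition2p1 (R : realType) (d : measure_display)
  (Omega : measurableType d) (P : probability Omega R)
  (S : set R) (F : nat -> set (set Omega)) (X : nat -> Omega -> R)
  (m : R -> R -> nat) (phi : R -> R -> R) :
  locally_finite S -> unbounded_above S -> S `<=` [set x | 0 <= x] -> S 0 ->
  filtration F -> adapted F X ->
  (forall t, (1 <= t)%N -> forall w, S (X t w)) ->
  P [set w | X 1%N w = 0] = 1%E ->
  (forall x y, S x -> S y -> (0 < m x y)%N /\ 0 < phi x y) ->
  (* P[X_{t + m(X_t,y)} = y | F_t] >= phi(X_t, y) a.s., for all t >= 1 and y in S *)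
  (forall y, S y -> forall t, (1 <= t)%N -> forall B, F t B ->
     (\int[P]_(w in B) (phi (X t w) y)%:E <=
        P (B `&` [set w | X (t + m (X t w) y)%N w = y]))%E) ->
  {ae P, forall w, limn_esup (fun t => (X t w)%:E) = +oo%E} /\
  ((forall n, (1 <= n)%N ->
      (* P[eta_{n+1} < oo | tau_n < oo] = P[eta_1 < oo], in product form *)
      P ([set w | isSome (exc_len X n.+1 w)] `&` [set w | isSome (ret_time X n w)]) =
        (P [set w | isSome (exc_len X 1 w)] * P [set w | isSome (ret_time X n w)])%E) ->
   let i := (P [set w | isSome (exc_len X 1 w)] < 1)%E /\
            {ae P, forall w, (fun t => X t w) @ \oo --> +oo} in
   let ii := P [set w | isSome (exc_len X 1 w)] = 1%E /\
            {ae P, forall w, limn_einf (fun t => (X t w)%:E) = (0:R)%:E} in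
   (i \/ ii) /\ ~ (i /\ ii)).
Proof.
move=> hlf hub hpos hS0 hF hA hS _ hmphi hyp.
exact: (@main_sec R d Omega P S F X m phi hlf hpos hF hA hS hmphi hyp hub hS0).
Qed.
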